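(* Let $d,s,n$ be positive integers, $f_0^*:\{\pm1\}^s\to\mathbb R$, $S^*\subset[d]$ with $|S^*|=s$, $f^*(\mathbf x)=f_0^*(\mathbf x_{S^*})$, and let $\mathcal D_n=\{(\mathbf X_i,Y_i)\}_{i=1}^n$ with $\mathbf X_i$ i.i.d. uniform on $\{\pm1\}^d$, $Y_i=f^*(\mathbf X_i)+\varepsilon_i$, $\varepsilon_i$ i.i.d. zero-mean independent of the covariates. Let $\hat f$ be a regression tree model fit by a regression tree algorithm $\mathcal A$ with random seed $\Theta$. Then $\mathfrak R(\hat f,f_0^*,d,n)\ge(1-\delta)\operatorname{Var}\{f_0^*(\mathbf X)\}$, where $\delta=\mathbb P\{J(\mathbf X;\mathcal D_n,\Theta)\cap S^*\ne\emptyset\}$ with $\mathbf X$ uniform on $\{\pm1\}^d$ independent of $(\mathcal D_n,\Theta)$.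
   Context: A cell is a subcube $C=\{\mathbf x:x_j=z_j,\ j\in J(C)\}$, split on $k\notin J(C)$ into $C\cap\{x_k=\pm1\}$. A regression tree model is a function constant on each leaf of a binary tree obtained by recursively splitting cells starting from $\{\pm1\}^d$; internal nodes are labeled by their split covariate. A regression tree algorithm maps $(\mathcal D_n,\Theta)$ to such a model, $\Theta$ being random and independent of the data. The query path of $\mathbf x$ is the root-to-leaf path to the leaf containing $\mathbf x$, and $J(\mathbf x;\mathcal D_n,\Theta)$ is the set of split covariates of the nodes on this path. $R(g,f^* )=\mathbb E_{\mathbf X}\{(g(\mathbf X)-f^*(\mathbf X))^2\}$, $\mathfrak R(\hat f,f_0^*,d,n)=\mathbb E_{\mathcal D_n,\Theta}R(\hat f(\cdot;\mathcal D_n,\Theta),f^* )$; $\operatorname{Var}\{f_0^*(\mathbf X)\}$ is the variance under the uniform distribution. *)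

(* Defs.v *)
From HB Require Import structures.
From mathcomp Require Import all_boot all_order all_algebra.
From mathcomp Require Import all_classical all_reals all_analysis.
Set Implicit Arguments. Unset Strict Implicit. Unset Printing Implicit Defensive.
Import Order.TTheory GRing.Theory Num.Theory.
Local Open Scope classical_set_scope.
Local Open Scope ring_scope.

(* Points of the hypercube {+-1}^d, encoded with true = +1, false = -1. *)
Definition cube (d : nat) := {ffun 'I_d -> bool}.

(* x_{S}: the sub-vector of x indexed by S (in increasing order of indices),
   viewed as a cube of {+-1}^s (meaningful when #|S| = s). *)
Definition subvec (d s : nat) (S : {set 'I_d}) (x : cube d) : cube s :=
  [ffun i : 'I_s => nth false [seq x j | j <- enum S] i].

(* The left child is the cell
   C /\ {x_k = -1}, the right child is C /\ {x_k = +1}. *)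
Inductive tree (R : Type) (d : nat) :=
| Leaf of R
| Node of 'I_d & tree R d & tree R d.
Arguments Leaf {R d}.
Arguments Node {R d}.

(* Well-formedness: the split covariate of a cell C is not in J(C). *)
Fixpoint valid_from (R : Type) (d : nat) (J : {set 'I_d}) (t : tree R d) : bool :=
  match t with
  | Leaf _ => true
  | Node k l r => (k \notin J) && valid_from (k |: J) l && valid_from (k |: J) r
  end.
Definition valid (R : Type) (d : nat) (t : tree R d) := valid_from (@finset.set0 _) t.

Fixpoint eval_tree (R : Type) (d : nat) (t : tree R d) (x : cube d) : R :=
  match t with
  | Leaf c => c
  | Node k l r => if x k then eval_tree r x else eval_tree l x
  end.

Fixpoint query_split_set (R : Type) (d : nat) (t : tree R d) (x : cube d)
    : {set 'I_d} :=
  match t with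
  | Leaf _ => @finset.set0 _
  | Node k l r => k |: (if x k then query_split_set r x else query_split_set l x)
  end.

Definition dataset (R : Type) (d n : nat) := {ffun 'I_n -> cube d * R}.

Definition unif_risk (R : realType) (d : nat) (g f : cube d -> R) : R :=
  (2 ^+ d)^-1 * \sum_(x : cube d) (g x - f x) ^+ 2.

Definition unif_mean (R : realType) (s : nat) (f0 : cube s -> R) : R :=
  (2 ^+ s)^-1 * \sum_(y : cube s) f0 y.
Definition unif_var (R : realType) (s : nat) (f0 : cube s -> R) : R :=
  (2 ^+ s)^-1 * \sum_(y : cube s) (f0 y - unif_mean f0) ^+ 2.

Definition mutually_independent (R : realType) (dO : measure_display)
    (O : measurableType dO) (P : probability O R) (I : finType)
    (G : I -> set (set O)) : Prop :=
  forall (F : {set I}) (E : I -> set O),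
    (forall i, i \in F -> G i (E i)) ->
    fine (P (\big[setI/setT]_(i in F) E i)) = \prod_(i in F) fine (P (E i)).

(* Index set for the 2n+1 random elements X_1..X_n, eps_1..eps_n, Theta. *)
Definition sample_events (R : realType) (dO : measure_display)
    (O : measurableType dO) (d n : nat) (dT : measure_display)
    (T : measurableType dT) (X : 'I_n -> O -> cube d) (eps : 'I_n -> O -> R)
    (Theta : O -> T) (i : ('I_n + 'I_n) + unit) : set (set O) :=
  match i with
  | inl (inl i) => [set X i @^-1` B | B in [set: set (cube d)]]
  | inl (inr i) => [set eps i @^-1` B | B in [set B : set R | measurable B]]
  | inr _ => [set Theta @^-1` B | B in [set B : set T | measurable B]]
  end.

(* Main.v *)
Require Import Defs.
From HB Require Import structures.
From mathcomp Require Import all_boot all_order all_algebra.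
From mathcomp Require Import all_classical all_reals all_analysis.
From mathcomp Require Import ring lra measurable_realfun.
Import Order.TTheory GRing.Theory Num.Theory.
Local Open Scope classical_set_scope.
Local Open Scope ring_scope.
Set Implicit Arguments. Unset Strict Implicit.

Definition agree (d : nat) (S : {set 'I_d}) (x x' : cube d) : bool :=
  [forall j, (j \notin S) ==> (x j == x' j)].

Definition merge (d s : nat) (S : {set 'I_d}) (i0 : 'I_s) (x : cube d) (y : cube s)
  : cube d :=
  [ffun j => if j \in S then y (insubd i0 (index j (enum S))) else x j].

Lemma agree_sym d (S : {set 'I_d}) x x' : agree S x x' = agree S x' x.
Proof.
apply/forallP/forallP => h j; have := h j; by rewrite eq_sym.
Qed.

Lemma agree_merge d s (S : {set 'I_d}) (i0 : 'I_s) x y : agree S x (merge S i0 x y).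
Proof. by apply/forallP => j; apply/implyP => hj; rewrite ffunE (negbTE hj). Qed.

Lemma subvec_merge d s (S : {set 'I_d}) (hS : #|S| = s) (i0 : 'I_s) (j0 : 'I_d) x y :
  subvec s S (merge S i0 x y) = y.
Proof.
apply/ffunP => i; rewrite ffunE.
have hi : (i < size (enum S))%N by rewrite -cardE hS.
rewrite (nth_map j0) // ffunE.
have -> : nth j0 (enum S) i \in S by rewrite -mem_enum mem_nth.
rewrite index_uniq ?enum_uniq //.
congr (y _); apply: val_inj; rewrite /= insubdK //.
exact: ltn_ord.
Qed.

Lemma merge_subvec d s (S : {set 'I_d}) (hS : #|S| = s) (i0 : 'I_s) (j0 : 'I_d) x x' :
  agree S x x' -> merge S i0 x (subvec s S x') = x'.
Proof.
move=> /forallP ha; apply/ffunP => j; rewrite ffunE.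
case: ifP => hj; last by have := ha j; rewrite hj /= => /eqP.
have hidx : (index j (enum S) < s)%N by rewrite -hS cardE index_mem mem_enum.
rewrite ffunE /= insubdK // (nth_map j0) ?nth_index ?mem_enum //.
by rewrite -cardE hS.
Qed.

Lemma fiber_sum (R : realType) d s (S : {set 'I_d}) (hS : #|S| = s) (i0 : 'I_s) (j0 : 'I_d)
  x (phi : cube d -> R) :
  \sum_(x' | agree S x x') phi x' = \sum_(y : cube s) phi (merge S i0 x y).
Proof.
rewrite (reindex_onto (merge S i0 x) (subvec s S)); last first.
  by move=> x' hx'; apply: merge_subvec.
apply: eq_bigl => y; by rewrite agree_merge (subvec_merge hS i0 j0) eqxx.
Qed.

Lemma path_stable (R : Type) d (t : tree R d) (x x' : cube d) :
  (forall j, j \in query_split_set t x -> x j = x' j) ->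
  query_split_set t x' = query_split_set t x /\ eval_tree t x' = eval_tree t x.
Proof.
elim: t => [c|k l IHl r IHr] //= h.
have hk : x k = x' k by apply: h; rewrite setU11.
rewrite -hk.
have h' : forall j, j \in (if x k then query_split_set r x else query_split_set l x) ->
   x j = x' j by move=> j hj; apply: h; rewrite setU1r.
case: (x k) h' => h'.
  by case: (IHr h') => -> ->.
by case: (IHl h') => -> ->.
Qed.

Definition good d (R : Type) (S : {set 'I_d}) (t : tree R d) (x : cube d) : bool :=
  query_split_set t x :&: S == @finset.set0 _.

Lemma good_agree (R : Type) d (S : {set 'I_d}) (t : tree R d) x x' :
  good S t x -> agree S x x' ->
  query_split_set t x' = query_split_set t x /\ eval_tree t x' = eval_tree t x.
Proof.
move=> hg /forallP ha; apply: path_stable => j hj.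
have hjS : j \notin S.
  apply/negP => hjS; move/eqP: hg => /setP /(_ j); by rewrite inE hj hjS inE.
by have := ha j; rewrite hjS /= => /eqP.
Qed.

Lemma good_agree2 (R : Type) d (S : {set 'I_d}) (t : tree R d) x x' :
  good S t x -> agree S x x' -> good S t x'.
Proof. by move=> hg ha; rewrite /good (good_agree hg ha).1. Qed.

Lemma sum_cube_const (R : realType) s (c : R) : \sum_(y : cube s) c = c * 2 ^+ s.
Proof.
by rewrite sumr_const card_ffun card_bool card_ord -[in LHS]mulr_natr natrX.
Qed.

Lemma var_ineq (R : realType) s (f0 : cube s -> R) c :
  \sum_(y : cube s) (f0 y - unif_mean f0) ^+ 2 <= \sum_(y : cube s) (c - f0 y) ^+ 2.
Proof.
set m := unif_mean f0.
have hN : (2 ^+ s : R) != 0 by rewrite expf_neq0 // pnatr_eq0.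
have hsum : \sum_(y : cube s) f0 y = 2 ^+ s * m.
  by rewrite /m /unif_mean mulrA mulfV // mul1r.
rewrite -subr_ge0 -sumrB.
rewrite (eq_bigr (fun y => (c - m) * (c + m) - (2 * (c - m)) * f0 y)); last first.
  by move=> y _; ring.
rewrite sumrB sum_cube_const -mulr_sumr hsum.
have -> : (c - m) * (c + m) * 2 ^+ s - 2 * (c - m) * (2 ^+ s * m) = 2 ^+ s * (c - m) ^+ 2 by ring.
apply: mulr_ge0; [apply: exprn_ge0; lra | exact: sqr_ge0].
Qed.

Lemma fiber_const (R : realType) d s (S : {set 'I_d}) (hS : #|S| = s) (i0 : 'I_s) (j0 : 'I_d)
  x (c : R) : \sum_(x' | agree S x x') c = c * 2 ^+ s.
Proof. by rewrite (fiber_sum hS i0 j0 x (fun _ => c)) sum_cube_const. Qed.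

Lemma tree_bound (R : realType) d s (S : {set 'I_d}) (hS : #|S| = s) (i0 : 'I_s) (j0 : 'I_d)
  (f0 : cube s -> R) (t : tree R d) :
  (1 - (2 ^+ d)^-1 * #|[pred x : cube d | query_split_set t x :&: S != @finset.set0 _]|%:R)
    * unif_var f0 <= unif_risk (eval_tree t) (fun x => f0 (subvec s S x)).
Proof.
set G := fun x : cube d => (eval_tree t x - f0 (subvec s S x)) ^+ 2.
set V := unif_var f0.
have hNs : (2 ^+ s : R) != 0 by rewrite expf_neq0 // pnatr_eq0.
have hNd : (0 : R) < 2 ^+ d by rewrite exprn_gt0 // ltr0n.
have dc : \sum_(x | good S t x) G x * 2 ^+ s =
          \sum_(x | good S t x) \sum_(x' | agree S x x') G x'.
  rewrite (exchange_big_dep (good S t)); last first.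
    by move=> x x' hg ha; exact: good_agree2 hg ha.
  apply: eq_bigr => x' hx'.
  rewrite -(fiber_const hS i0 j0 x' (G x')).
  apply: eq_bigl => x; apply/idP/andP => [h|[_ h]]; last by rewrite agree_sym.
  split; last by rewrite agree_sym.
  exact: good_agree2 hx' h.
have fib : forall x, good S t x ->
    2 ^+ s * V <= \sum_(x' | agree S x x') G x'.
  move=> x hg.
  rewrite (fiber_sum hS i0 j0 x G).
  rewrite (eq_bigr (fun y => (eval_tree t x - f0 y) ^+ 2)); last first.
    move=> y _; rewrite /G (subvec_merge hS i0 j0) (good_agree hg (agree_merge _ i0 x y)).2 //.
  rewrite /V /unif_var mulrA mulfV // mul1r.
  exact: var_ineq.
have hgood : \sum_(x | good S t x) V <= \sum_(x | good S t x) G x.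
  have : \sum_(x | good S t x) V * 2 ^+ s <= \sum_(x | good S t x) G x * 2 ^+ s.
    rewrite dc; apply: ler_sum => x hg; rewrite mulrC; exact: fib.
  by rewrite -!mulr_suml ler_pM2r // exprn_gt0 // ltr0n.
have hcard : (#|[pred x : cube d | query_split_set t x :&: S != @finset.set0 _]|%:R : R)
   = 2 ^+ d - \sum_(x | good S t x) 1.
  have h1 : \sum_(x : cube d) (1 : R) = 2 ^+ d by rewrite sum_cube_const mul1r.
  rewrite -h1 (bigID (good S t)) /= addrC addrK.
  rewrite sumr_const; congr (_ *+ _); apply: eq_card => x.

rewrite hcard.
have -> : 1 - (2 ^+ d)^-1 * (2 ^+ d - \sum_(x | good S t x) (1 : R)) =
   (2 ^+ d)^-1 * \sum_(x | good S t x) (1 : R).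
  by rewrite mulrBr mulVf ?gt_eqF // subKr.
rewrite /unif_risk -mulrA ler_pM2l ?invr_gt0 //.
rewrite mulr_suml.
under eq_bigr do rewrite mul1r.
apply: (le_trans hgood).
rewrite [X in _ <= X](bigID (good S t)) /= lerDl.
by apply: sumr_ge0 => x _; exact: sqr_ge0.
Qed.
Unset Implicit Arguments. Set Strict Implicit.

Lemma card_sum_indic (R : realType) (O : Type) d (b : O -> cube d -> bool) (w : O) :
  (#|[pred x : cube d | b w x]|%:R : R) = \sum_(x : cube d) \1_[set w' | b w' x] w.
Proof.
rewrite -sum1_card natr_sum big_mkcond /=.
apply: eq_bigr => x _; rewrite indicE.
rewrite inE; case: (boolP (b w x)) => h; [rewrite mem_set | rewrite memNset] => //=.
by move=> /= h'; rewrite h' in h.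
Qed.

Theorem lemma3 (R : realType) (d s n : nat)
  (hd : (0 < d)%N) (hs : (0 < s)%N) (hn : (0 < n)%N)
  (f0 : cube s -> R) (Sstar : {set 'I_d}) (hS : #|Sstar| = s)
  (dO : measure_display) (O : measurableType dO) (P : probability O R)
  (dT : measure_display) (T : measurableType dT)
  (X : 'I_n -> O -> cube d) (eps : 'I_n -> O -> R) (Theta : O -> T)
  (A : dataset R d n -> T -> tree R d) :
  let fstar := fun x : cube d => f0 (subvec s Sstar x) in
  let Dn := fun w : O => [ffun i => (X i w, fstar (X i w) + eps i w)] in
  let fit := fun w : O => A (Dn w) (Theta w) in
  (* X_i uniform on {+-1}^d *)
  (forall i (x : cube d), measurable (X i @^-1` [set x]) /\
     P (X i @^-1` [set x]) = ((2 ^+ d)^-1)%:E) ->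
  (* eps_i identically distributed, integrable, zero mean *)
  (forall i, measurable_fun setT (eps i)) ->
  (forall i j (B : set R), measurable B ->
     P (eps i @^-1` B) = P (eps j @^-1` B)) ->
  (forall i, P.-integrable setT (EFin \o eps i) /\
     (\int[P]_w (eps i w)%:E = 0)%E) ->
  (* Theta is a random element *)
  measurable_fun setT Theta ->
  (* X_1..X_n, eps_1..eps_n, Theta mutually independent *)
  mutually_independent P (sample_events X eps Theta) ->
  (* A is a regression tree algorithm *)
  (forall D th, valid (A D th)) ->
  (* measurability of the fitted model and of the query-path events *)
  (forall x : cube d, measurable_fun setT (fun w => eval_tree (fit w) x)) ->
  (forall x : cube d,
     measurable [set w | query_split_set (fit w) x :&: Sstar != @finset.set0 _]) ->
  let risk := (\int[P]_w (unif_risk (eval_tree (fit w)) fstar)%:E)%E in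
  let delta := (\int[P]_w
      ((2 ^+ d)^-1 *
       #|[pred x : cube d | query_split_set (fit w) x :&: Sstar != @finset.set0 _]|%:R)%:E)%E in
  ((1 - delta) * (unif_var f0)%:E <= risk)%E.
Proof.
move=> fstar Dn fit _ _ _ _ _ _ _ hmeas hbad; lazy zeta.
pose i0 := Ordinal hs; pose j0 := Ordinal hd.
pose hw := fun w => (2 ^+ d)^-1 *
       (#|[pred x : cube d | query_split_set (fit w) x :&: Sstar != @finset.set0 _]|%:R : R).
pose rw := fun w => unif_risk (eval_tree (fit w)) fstar.
pose V := unif_var f0.
have hNd : (0 : R) < 2 ^+ d by rewrite exprn_gt0 // ltr0n.
have hNs : (0 : R) < 2 ^+ s by rewrite exprn_gt0 // ltr0n.
have V0 : 0 <= V.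
  rewrite /V /unif_var; apply: mulr_ge0; first by rewrite invr_ge0 ltW.
  by apply: sumr_ge0 => y _; exact: sqr_ge0.
have hw0 : forall w, 0 <= hw w.
  by move=> w; apply: mulr_ge0 => //; rewrite invr_ge0 ltW.
have hw1 : forall w, hw w <= 1.
  move=> w; rewrite /hw ler_pdivrMl // mulr1.
  have := max_card [pred x : cube d | query_split_set (fit w) x :&: Sstar != @finset.set0 _].
  rewrite card_ffun card_bool card_ord => h.
  by rewrite -natrX ler_nat.
have pt : forall w, (1 - hw w) * V <= rw w.
  by move=> w; exact: (tree_bound hS i0 j0 f0 (fit w)).
have mhw : measurable_fun setT hw.
  rewrite /hw; apply: measurable_realfun.measurable_funM => //.
  rewrite (_ : (fun w => _) = (fun w => \sum_(x : cube d)
      \1_[set w' | query_split_set (fit w') x :&: Sstar != @finset.set0 _] w)).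
    by apply: measurable_sum => x; exact: measurable_realfun.measurable_indic.
  apply/funext => w.
  exact: (@card_sum_indic R O d (fun w x => query_split_set (fit w) x :&: Sstar != @finset.set0 _) w).
have mrw : measurable_fun setT rw.
  rewrite /rw /unif_risk; apply: measurable_realfun.measurable_funM => //.
  apply: measurable_sum => x; apply: measurable_realfun.measurable_funX.
  by apply: measurable_realfun.measurable_funB => //.
have mE : forall f : O -> R, measurable_fun setT f ->
    measurable_fun setT (EFin \o f).
  by move=> f mf; apply/measurable_realfun.measurable_EFinP.
have mlow : measurable_fun setT (fun w => (1 - hw w) * V).
  apply: measurable_realfun.measurable_funM => //.
  by apply: measurable_realfun.measurable_funB.
have mhV : measurable_fun setT (fun w => hw w * V).
  by apply: measurable_realfun.measurable_funM.
change ((1 - \int[P]_w (hw w)%:E) * V%:E <= \int[P]_w (rw w)%:E)%E.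
have b0 : (0 <= \int[P]_w (hw w)%:E)%E.
  by apply: integral_ge0 => w _; rewrite lee_fin.
have b1 : (\int[P]_w (hw w)%:E <= 1)%E.
  have := @ge0_le_integral _ _ _ P setT measurableT (fun w => (hw w)%:E) (fun _ => 1%E)
    (fun w _ => hw0 w) (mE _ mhw) (measurable_cst _) (fun w _ => hw1 w).
  by rewrite integral_cst //= probability_setT mul1e.
have hb : (\int[P]_w (hw w * V)%:E = \int[P]_w (hw w)%:E * V%:E)%E.
  rewrite -(@ge0_integralZr _ _ _ P setT measurableT (fun w => (hw w)%:E) (mE _ mhw) V%:E
    (fun w _ => hw0 w) V0).
  by apply: eq_integral => w wT; rewrite EFinM.
have hsum : (\int[P]_w ((1 - hw w) * V)%:E + \int[P]_w (hw w * V)%:E = V%:E)%E.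
  have h1 : forall w, setT w -> (0 <= ((1 - hw w) * V)%:E)%E.
    by move=> w _; rewrite lee_fin mulr_ge0 // subr_ge0.
  have h2 : forall w, setT w -> (0 <= (hw w * V)%:E)%E.
    by move=> w _; rewrite lee_fin mulr_ge0.
  rewrite -(@ge0_integralD _ _ _ P setT measurableT (fun w => ((1 - hw w) * V)%:E)
     (fun w => (hw w * V)%:E) h1 (mE _ mlow) h2 (mE _ mhV)).
  rewrite (eq_integral (fun _ => V%:E)); last first.
    by move=> w _; rewrite -EFinD; congr (_%:E); ring.
  by rewrite integral_cst //= probability_setT mule1.
have hle : (\int[P]_w ((1 - hw w) * V)%:E <= \int[P]_w (rw w)%:E)%E.
  apply: (@ge0_le_integral _ _ _ P setT measurableT (fun w => ((1 - hw w) * V)%:E)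
     (fun w => (rw w)%:E)) => //.
  - by move=> w _; rewrite lee_fin mulr_ge0 // subr_ge0.
  - exact: (mE _ mlow).
  - exact: (mE _ mrw).
  - by move=> w _; rewrite lee_fin.
move: b0 b1 hsum hle; rewrite hb.
case: (\int[P]_w (hw w)%:E)%E => [r| |] //= b0 b1.
case: (\int[P]_w ((1 - hw w) * V)%:E)%E => [a| |] //= hsm hle.
move: hsm => /eqP; rewrite -EFinM -EFinD eqe => /eqP hsm.
rewrite -EFinB -EFinM; apply: le_trans hle; rewrite lee_fin.
have -> : (1 - r) * V = a by rewrite -[X in _ = X](addrK (r * V)) hsm; ring.
by [].
Qed.
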